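(* Let $\mathcal{G}(\boldsymbol{W},\boldsymbol{U})$ be a hidden variables DAG with discrete finite observed variables satisfying Conditions 1 and 2 below, and let $D_1$ be a district of c-degree 1 with observed variables $\boldsymbol{W}_1$ and $\boldsymbol{W}_2=\mathrm{Pa}_{obs}(\boldsymbol{W}_1)\setminus\boldsymbol{W}_1$. Let the H-representation of the constraints on this district produced by the algorithm below be $H_i\boldsymbol{p}\le b_i$ and $H_e\boldsymbol{p}=b_e$, where $\boldsymbol{p}=[\mathrm{P}^*(\boldsymbol{W}_1=w_1\mid\boldsymbol{W}_2=w_2)]$ over all values $w_1,w_2$. Let $\check{\boldsymbol{P}}$ be the Cartesian product of probability simplices, one for each value $w_2$ of $\boldsymbol{W}_2$ (each simplex consisting of the vectors $(p(w_1,w_2))_{w_1}$ with nonnegative entries summing to 1), ordered consistently with $\boldsymbol{p}$. Then any nontrivial constraint encoded by (a row of) $H_i$ or $H_e$ is violated by at least one extreme point of $\check{\boldsymbol{P}}$.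
   Context: Notation: $\mathrm{Pa}_{obs}$, $\mathrm{An}_{obs}$ (including the vertex itself), $\mathrm{Ch}_{obs}$ denote observed parents, ancestors, children. Condition 1: every unobserved variable has no parents. Condition 2: for each $U_i$, $|\mathrm{Ch}_{obs}(U_i)|\ge 2$ and no other $U_j$ has $\mathrm{Ch}_{obs}(U_i)\subseteq\mathrm{Ch}_{obs}(U_j)$. Districts: delete all edges not originating from unobserved variables; connected sets of observed variables are districts. The c-degree of a district is the maximum of 1 and the number of unobserved parents of its members. $\mathrm{P}^*(\boldsymbol{W}_1=w_1\mid\boldsymbol{W}_2=w_2)=\prod_i\mathrm{P}(W_{1i}=w_{1i}\mid\{\mathrm{Pa}_{obs}(\boldsymbol{W}_1)\cap\mathrm{An}_{obs}(W_{1i})\}\setminus W_{1i})$. Response variables: each observed $W_i$ has a latent $R_{W_i}$ indexing all functions from the domain of $\mathrm{Pa}_{obs}(W_i)$ to that of $W_i$, determining $W_i$. Algorithm for the district: with $\mathcal{B}(w_1,w_2)$ the set of values $b$ of $\boldsymbol{R}_{\boldsymbol{W}_1}$ that, given $\boldsymbol{W}_2=w_2$, recursively produce $\boldsymbol{W}_1=w_1$, form the 0/1 matrix $\boldsymbol{B}$ with $\boldsymbol{p}=\boldsymbol{B}\boldsymbol{r}$, $\boldsymbol{r}$ the vector of response-variable probabilities (nonnegative, summing to 1), and convert the polytope $\{\boldsymbol{B}\boldsymbol{r}\}$ to an H-representation $H_i\boldsymbol{p}\le b_i$, $H_e\boldsymbol{p}=b_e$. An observable constraint is nontrivial if it restricts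 the joint distribution beyond the standard probabilistic constraints (probabilities lie in $[0,1]$ and sum to 1), i.e. there is some $\boldsymbol{p}\in\check{\boldsymbol{P}}$ violating it. *)

(* Defs.v *)
From HB Require Import structures.
From mathcomp Require Import all_boot all_order all_algebra.
Set Implicit Arguments. Unset Strict Implicit. Unset Printing Implicit Defensive.
Import Order.TTheory GRing.Theory Num.Theory.
Local Open Scope ring_scope.

(* Vertices: observed variables W_i (inl i, i : 'I_n) and unobserved
   variables U_u (inr u, u : 'I_m).  E x y means there is an edge x -> y. *)
Definition vtx (n m : nat) := ('I_n + 'I_m)%type.

Definition acyclic {n m} (E : rel (vtx n m)) : Prop :=
  forall x y, E x y -> ~~ connect E y x.

Definition condition1 {n m} (E : rel (vtx n m)) : Prop :=
  forall (v : vtx n m) (u : 'I_m), ~~ E v (inr u).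

Definition ch_obs {n m} (E : rel (vtx n m)) (u : 'I_m) : {set 'I_n} :=
  [set j | E (inr u) (inl j)].

Definition condition2 {n m} (E : rel (vtx n m)) : Prop :=
  forall u : 'I_m, (2 <= #|ch_obs E u|)%N /\
    (forall u' : 'I_m, u' != u -> ~~ (ch_obs E u \subset ch_obs E u')).

Definition pa_obs {n m} (E : rel (vtx n m)) (i : 'I_n) : {set 'I_n} :=
  [set j | E (inl j) (inl i)].
Definition pa_obs_set {n m} (E : rel (vtx n m)) (S : {set 'I_n}) : {set 'I_n} :=
  [set j | [exists i in S, E (inl j) (inl i)]].

(* Two observed vertices are adjacent in the graph obtained by deleting all
   edges not originating from unobserved variables iff they share an
   unobserved parent; districts are the connected classes of observed
   vertices of that graph. *)
Definition sib {n m} (E : rel (vtx n m)) : rel 'I_n :=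
  fun i j => [exists u : 'I_m, E (inr u) (inl i) && E (inr u) (inl j)].
Definition district {n m} (E : rel (vtx n m)) (S : {set 'I_n}) : Prop :=
  exists i : 'I_n, S = [set j | connect (sib E) i j].

Definition upa_set {n m} (E : rel (vtx n m)) (S : {set 'I_n}) : {set 'I_m} :=
  [set u | [exists i in S, E (inr u) (inl i)]].
Definition cdegree {n m} (E : rel (vtx n m)) (S : {set 'I_n}) : nat :=
  maxn 1 #|upa_set E S|.

Definition W2of {n m} (E : rel (vtx n m)) (W1 : {set 'I_n}) : {set 'I_n} :=
  pa_obs_set E W1 :\: W1.

(* dom i is the (finite) state space of W_i.  A value of the set S of
   observed variables is an assignment defined exactly on S. *)
Definition asg {n} (dom : 'I_n -> finType) (S : {set 'I_n}) :=
  {x : {dffun forall i : 'I_n, option (dom i)} | [forall i, (x i != None) == (i \in S)]}.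

(* Response variable R_{W_i}: all functions from the values of Pa_obs(W_i)
   to the values of W_i. Joint response variable of the district W1. *)
Definition resp {n m} (E : rel (vtx n m)) (dom : 'I_n -> finType) (i : 'I_n) :=
  {ffun asg dom (pa_obs E i) -> dom i}.
Definition resp_profile {n m} (E : rel (vtx n m)) (dom : 'I_n -> finType)
    (W1 : {set 'I_n}) :=
  {dffun forall i : {i : 'I_n | i \in W1}, resp E dom (val i)}.

Definition merge {n} (dom : 'I_n -> finType) (S1 S2 : {set 'I_n})
    (w1 : asg dom S1) (w2 : asg dom S2) (j : 'I_n) : option (dom j) :=
  if val w1 j is Some v then Some v else val w2 j.

(* b, given W2 = w2, produces W1 = w1: all structural equations
   W_i = b_i(Pa_obs(W_i)), i in W1, hold for the joint value (w1, w2).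
   (By acyclicity this is the unique recursively produced value.) *)
Definition produces {n m} (E : rel (vtx n m)) (dom : 'I_n -> finType)
    (W1 : {set 'I_n}) (b : resp_profile E dom W1)
    (w2 : asg dom (W2of E W1)) (w1 : asg dom W1) : bool :=
  [forall i : {i : 'I_n | i \in W1}, forall a : asg dom (pa_obs E (val i)),
     [forall j in pa_obs E (val i), val a j == merge w1 w2 j] ==>
     (Some (b i a) == val w1 (val i))].

Definition pidx {n m} (E : rel (vtx n m)) (dom : 'I_n -> finType) (W1 : {set 'I_n}) :=
  (asg dom W1 * asg dom (W2of E W1))%type.

(* The polytope { B r : r a probability vector on the values of R_{W1} }. *)
Definition Bpolytope {R : realFieldType} {n m} (E : rel (vtx n m))
    (dom : 'I_n -> finType) (W1 : {set 'I_n}) (p : {ffun pidx E dom W1 -> R}) : Prop :=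
  exists r : {ffun resp_profile E dom W1 -> R},
    [/\ forall b, 0 <= r b, \sum_b r b = 1 &
        forall w1 w2, p (w1, w2) = \sum_b (produces b w2 w1)%:R * r b].

Definition Pcheck {R : realFieldType} {n m} (E : rel (vtx n m))
    (dom : 'I_n -> finType) (W1 : {set 'I_n}) (p : {ffun pidx E dom W1 -> R}) : Prop :=
  (forall x, 0 <= p x) /\ (forall w2, \sum_(w1 : asg dom W1) p (w1, w2) = 1).

Definition extreme_point {R : realFieldType} {I : finType}
    (S : {ffun I -> R} -> Prop) (x : {ffun I -> R}) : Prop :=
  S x /\ forall (y z : {ffun I -> R}) (t : R), S y -> S z -> 0 < t < 1 ->
    (forall a, x a = t * y a + (1 - t) * z a) -> y = z.

Definition dotp {R : realFieldType} {I : finType} (h p : {ffun I -> R}) : R :=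
  \sum_x h x * p x.

Arguments Bpolytope {R n m} E dom W1 p.
Arguments Pcheck {R n m} E dom W1 p.
Arguments pidx {n m} E dom W1.
Arguments produces {n m} E dom W1 b w2 w1.
Arguments extreme_point {R I} S x.
Arguments dotp {R I} h p.

(* Main.v *)
Require Import Defs.
From HB Require Import structures.
From mathcomp Require Import all_boot all_order all_algebra.
From mathcomp Require Import ring.
Import Order.TTheory GRing.Theory Num.Theory.
Local Open Scope ring_scope.

Lemma dotpE (R : realFieldType) n m (E : rel (vtx n m)) dom W1
  (h p : {ffun pidx E dom W1 -> R}) :
  dotp h p = \sum_(w2 : asg dom (W2of E W1)) \sum_(w1 : asg dom W1)
               h (w1, w2) * p (w1, w2).
Proof.
rewrite /dotp exchange_big pair_big /=.
by apply: eq_bigr => -[w1 w2].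
Qed.

Lemma vertex_max (R : realFieldType) n m (E : rel (vtx n m)) dom W1
  (h p : {ffun pidx E dom W1 -> R}) :
  Pcheck E dom W1 p ->
  exists q, extreme_point (Pcheck E dom W1) q /\ dotp h p <= dotp h q.
Proof.
move=> Pp.
case: (pickP (@predT (asg dom W1))) => [w0 _ | hnone]; last first.
  have no2 : forall w2 : asg dom (W2of E W1), False.
    move=> w2; have := (proj2 Pp) w2.
    rewrite big1 => [/eqP|w1 _]; first by rewrite eq_sym oner_eq0.
    by have := hnone w1.
  exists p; split => //; split => // y z t _ _ _ _.
  by apply/ffunP => -[w1 w2]; case: (no2 w2).
pose f (w2 : asg dom (W2of E W1)) :=
  [arg max_(w1 > w0) h (w1, w2)]%O.
have fmax : forall w2 w1, h (w1, w2) <= h (f w2, w2).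
  move=> w2 w1; rewrite /f.
  by case: arg_maxP => // i _ Hi; apply: Hi.
pose q : {ffun pidx E dom W1 -> R} := [ffun x => ((x.1 == f x.2)%:R : R)].
have qsum : forall w2, \sum_(w1 : asg dom W1) q (w1, w2) = 1.
  move=> w2; rewrite (bigD1 (f w2)) //= ffunE eqxx big1 ?addr0 // => w1 /negbTE.
  by rewrite ffunE /= => ->.
have Pq : Pcheck E dom W1 q.
  by split => // x; rewrite ffunE ler0n.
exists q; split.
  split => // y z t Py Pz /andP[t0 t1] Hq.
  have key : forall (a b : {ffun pidx E dom W1 -> R}) (s : R),
      Pcheck E dom W1 a -> Pcheck E dom W1 b -> 0 < s -> s < 1 ->
      (forall x, q x = s * a x + (1 - s) * b x) -> a = q.
    move=> a b s [a0 asum] [b0 bsum] s0 s1 Hs.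
    have off : forall w1 w2, w1 != f w2 -> a (w1, w2) = 0.
      move=> w1 w2 ne; have := Hs (w1, w2); rewrite ffunE /= (negbTE ne) /=.
      move/esym/eqP; rewrite paddr_eq0 ?mulr_ge0 ?subr_ge0 ?(ltW s0) ?(ltW s1) //.
      by case/andP; rewrite mulf_eq0 (gt_eqF s0) /= => /eqP.
    apply/ffunP => -[w1 w2].
    case: (eqVneq w1 (f w2)) => [->|ne]; last first.
      by rewrite off // ffunE /= (negbTE ne).
    have := asum w2; rewrite (bigD1 (f w2)) //= big1 ?addr0 => [->|w].
      by rewrite ffunE /= eqxx.
    by move=> ne; apply: off; move: ne; rewrite ?andTb.
  have ey := key y z t Py Pz t0 t1 Hq.
  have ez : z = q.
    apply: (key z y (1 - t)) => //; first by rewrite subr_gt0.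
      by rewrite ltrBlDr ltrDl.
    by move=> x; rewrite Hq; ring.
  by rewrite ey ez.
rewrite !dotpE; apply: ler_sum => w2 _.
have -> : \sum_(w1 : asg dom W1) h (w1, w2) * q (w1, w2) = h (f w2, w2).
  rewrite (bigD1 (f w2)) //= ffunE eqxx mulr1 big1 ?addr0 // => w1 /negbTE.
  by rewrite ffunE /= => ->; rewrite mulr0.
apply: (@le_trans _ _ (\sum_(w1 : asg dom W1) h (f w2, w2) * p (w1, w2))).
  by apply: ler_sum => w1 _; apply: ler_wpM2r; [apply: (proj1 Pp)| apply: fmax].
by rewrite -mulr_sumr (proj2 Pp) mulr1.
Qed.

Theorem proposition4 (R : realFieldType) (n m : nat) (E : rel (vtx n m))
    (dom : 'I_n -> finType) (W1 : {set 'I_n})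
    (ki ke : nat) (Hi : 'I_ki -> {ffun pidx E dom W1 -> R}) (bi : 'I_ki -> R)
    (He : 'I_ke -> {ffun pidx E dom W1 -> R}) (be : 'I_ke -> R) :
  acyclic E -> condition1 E -> condition2 E ->
  (forall i : 'I_n, (0 < #|dom i|)%N) ->
  district E W1 -> cdegree E W1 = 1%N ->
  (forall p : {ffun pidx E dom W1 -> R},
     Bpolytope E dom W1 p <->
     ((forall k, dotp (Hi k) p <= bi k) /\ (forall k, dotp (He k) p = be k))) ->
  (forall k : 'I_ki,
     (exists p, Pcheck E dom W1 p /\ bi k < dotp (Hi k) p) ->
     exists q, extreme_point (Pcheck E dom W1) q /\ bi k < dotp (Hi k) q) /\
  (forall k : 'I_ke,
     (exists p, Pcheck E dom W1 p /\ dotp (He k) p != be k) ->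
     exists q, extreme_point (Pcheck E dom W1) q /\ dotp (He k) q != be k).
Proof.
move=> _ _ _ _ _ _ _; split.
  move=> k [p [Pp lt]].
  have [q [eq le]] := @vertex_max _ _ _ _ _ _ (Hi k) _ Pp.
  by exists q; split => //; apply: (lt_le_trans lt le).
move=> k [p [Pp ne]].
have negd : forall (h x : {ffun pidx E dom W1 -> R}),
    dotp [ffun y => - h y] x = - dotp h x.
  by move=> h x; rewrite /dotp -sumrN; apply: eq_bigr => y _; rewrite ffunE mulNr.
case: (ltgtP (dotp (He k) p) (be k)) ne => // [lt|gt] _.
  have [q [eq le]] := @vertex_max _ _ _ _ _ _ [ffun y => - He k y] _ Pp.
  exists q; split => //; rewrite !negd lerN2 in le.
  by rewrite lt_eqF // (le_lt_trans le lt).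
have [q [eq le]] := @vertex_max _ _ _ _ _ _ (He k) _ Pp.
by exists q; split => //; rewrite gt_eqF // (lt_le_trans gt le).
Qed.
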